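(* Let $G$ be a locally compact group and $\mathcal K$ a class of finite algebras. Then $G$ is approximable by systems of $\mathcal K$ in the group sense (Definition B below) if and only if it is approximable by systems of $\mathcal K$ in the general sense (Definition A below).
   Context: An algebra is a set with one binary operation; $(H,\odot)$ denotes a finite algebra. Definition A (general): for a compact $C\subseteq G$ and a finite cover $\mathcal U$ of $C$ by open sets, $j:H\to G$ gives a $(C,\mathcal U)$-approximation if every $U\in\mathcal U$ with $U\cap C\neq\emptyset$ contains a point of $j(H)$, and for all $x,y\in H$ with $j(x),j(y),j(x)j(y)\in C$ there is $U\in\mathcal U$ with $j(x\odot y)\in U$ and $j(x)j(y)\in U$; $G$ is approximable by $\mathcal K$ if for all such $C,\mathcal U$ there is a $(C,\mathcal U)$-approximation $(H,j)$ with $H\in\mathcal K$ and $j$ injective. Definition B (group): for a compact $C\subseteq G$ and a neighborhood $U$ of the unit, $j:H\to G$ gives a $(C,U)$-approximation if $C\subseteq j(H)U$ and for all $x,y\in H$ with $j(x),j(y),j(x)j(y)\in C$ one has $j(x\odot y)\in j(x)j(y)U$; $G$ is approximable by $\mathcal K$ if for all compact $C$ and all neighborhoods $U$ of the unit there is a $(C,U)$-approximation $(H,j)$ with $H\in\mathcal K$ and $j$ injective. *)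

(* Defs.v *)
From HB Require Import structures.
From mathcomp Require Import all_boot all_order all_algebra.
From mathcomp Require Import all_classical all_reals all_analysis.
Set Implicit Arguments. Unset Strict Implicit. Unset Printing Implicit Defensive.
Local Open Scope classical_set_scope.

Record topological_group (G : topologicalType)
    (mul : G -> G -> G) (inv : G -> G) (one : G) : Prop := {
  tg_mulA : forall x y z, mul x (mul y z) = mul (mul x y) z;
  tg_mul1g : forall x, mul one x = x;
  tg_mulg1 : forall x, mul x one = x;
  tg_mulVg : forall x, mul (inv x) x = one;
  tg_mulgV : forall x, mul x (inv x) = one;
  tg_mul_cont : continuous (fun p : G * G => mul p.1 p.2);
  tg_inv_cont : continuous inv }.

Definition locally_compact_space (G : topologicalType) : Prop :=
  hausdorff_space G /\ forall x : G, exists K : set G, compact K /\ nbhs x K.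

Definition algebra_class := forall H : finType, (H -> H -> H) -> Prop.

Definition general_approx (G : topologicalType) (mul : G -> G -> G)
    (C : set G) (Us : seq (set G)) (H : finType) (op : H -> H -> H)
    (j : H -> G) : Prop :=
  (forall U, U \in Us -> U `&` C !=set0 -> exists h : H, U (j h)) /\
  (forall x y : H, C (j x) -> C (j y) -> C (mul (j x) (j y)) ->
     exists2 U, U \in Us & U (j (op x y)) /\ U (mul (j x) (j y))).

Definition approximable_general (G : topologicalType) (mul : G -> G -> G)
    (K : algebra_class) : Prop :=
  forall (C : set G) (Us : seq (set G)),
    compact C -> (forall U, U \in Us -> open U) ->
    C `<=` (fun g => exists2 U, U \in Us & U g) ->
    exists (H : finType) (op : H -> H -> H) (j : H -> G),
      K H op /\ injective j /\ general_approx mul C Us op j.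

Definition group_approx (G : topologicalType) (mul : G -> G -> G)
    (C U : set G) (H : finType) (op : H -> H -> H) (j : H -> G) : Prop :=
  (forall c, C c -> exists h u, U u /\ c = mul (j h) u) /\
  (forall x y : H, C (j x) -> C (j y) -> C (mul (j x) (j y)) ->
     exists u, U u /\ j (op x y) = mul (mul (j x) (j y)) u).

Definition approximable_group (G : topologicalType) (mul : G -> G -> G)
    (one : G) (K : algebra_class) : Prop :=
  forall (C U : set G), compact C -> nbhs one U ->
    exists (H : finType) (op : H -> H -> H) (j : H -> G),
      K H op /\ injective j /\ group_approx mul C U op j.

(* Main.v *)
From HB Require Import structures.
Require Import Defs.
From mathcomp Require Import all_boot all_order all_algebra.
From mathcomp Require Import all_classical all_reals all_analysis.
Local Open Scope classical_set_scope.
Definition pt {G : topologicalType} (x : G) : Type := G.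
HB.instance Definition _ (G : topologicalType) (x : G) := Topological.copy (pt x) G.
HB.instance Definition _ (G : topologicalType) (x : G) := isPointed.Build (pt x) x.
Lemma cc (G : topologicalType) (x : G) (C : set G) : compact C -> @cover_compact (pt x) C.
Proof. by move=> cC; rewrite -compact_cover. Qed.
Lemma near_mul {G : topologicalType} {mul : G -> G -> G} {inv : G -> G} {one : G}
  (tg : topological_group mul inv one) {c : G} {O : set G} :
  open O -> O c -> \forall x \near c & i \near one, O x /\ O (mul x i).
Proof.
move=> oO Oc.
have hc := @tg_mul_cont _ _ _ _ tg (c, one).
have : nbhs (mul c one) O by rewrite (tg_mulg1 tg); exact: open_nbhs_nbhs.
move=> /hc /= h.
have hO : nbhs c O by exact: open_nbhs_nbhs.
have h' : \forall p \near (c, one), O (mul p.1 p.2) := h.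
rewrite /prop_near2 /=.
have h2 : \forall p \near (c, one), O p.1.
  exists (O, setT) => /=; first by split => //; exact: filterT.
  by move=> [a b] [] /=.
apply: filterS (filterI h' h2).
by move=> [a b] /= [].
Qed.

Lemma near_seq {T : Type} {F : set_system T} {FF : Filter F} {A : eqType}
  {s : seq A} {P : A -> T -> Prop} :
  (forall a, a \in s -> F (P a)) -> F (fun t => forall a, a \in s -> P a t).
Proof.
elim: s => [|a s IH] h.
  by apply: filterS filterT => t _ a; rewrite in_nil.
apply: filterS (filterI (h a (mem_head _ _)) (IH _)).
  move=> t [Pa Ps] b; rewrite in_cons => /orP [/eqP -> //|]; exact: Ps.
by move=> b bs; apply: h; rewrite in_cons bs orbT.
Qed.

Lemma near2_fst {G : topologicalType} {I : Type} {F : set_system I} (FF : Filter F)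
  {c : G} {P : G -> I -> Prop} :
  (\forall x \near c & i \near F, P x i) -> F (P c).
Proof.
case=> [[A B] /= [nA FB] sub]; apply: filterS FB => i Bi.
by apply: (sub (c, i)); split => //; exact: nbhs_singleton.
Qed.

Lemma mul_split {G : topologicalType} {mul : G -> G -> G} {inv : G -> G} {one : G}
  (tg : topological_group mul inv one) {a b : G} {W : set G} :
  nbhs (mul a b) W -> exists A B, nbhs a A /\ nbhs b B /\
     forall x y, A x -> B y -> W (mul x y).
Proof.
move=> /(@tg_mul_cont _ _ _ _ tg (a, b)) h.
have h' : \forall p \near (a, b), W (mul p.1 p.2) := h.
case: h' => [[A B] /= [nA nB] sub].
exists A, B; split => //; split => // x y Ax By.
exact: (sub (x, y)).
Qed.

Lemma inv_one {G : topologicalType} {mul : G -> G -> G} {inv : G -> G} {one : G}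
  (tg : topological_group mul inv one) : inv one = one.
Proof. by rewrite -{2}(tg_mulVg tg one) (tg_mulg1 tg). Qed.

Theorem proposition3 (G : topologicalType) (mul : G -> G -> G) (inv : G -> G)
    (one : G) (K : algebra_class) :
  topological_group mul inv one -> locally_compact_space G ->
  (approximable_group mul one K <-> approximable_general mul K).
Proof.
move=> tg _; split.
- move=> hB C Us cC oUs cov.
  have P1 : \forall i \near one, forall c, C c ->
      exists2 U, U \in Us & U c /\ U (mul c i).
    have := (compact_near_coveringP C).1 cC G (nbhs one)
      (fun i c => exists2 U, U \in Us & U c /\ U (mul c i)) (nbhs_filter one).
    apply => x Cx.
    have [U UU Ux] := cov x Cx.
    have hh := near_mul tg (oUs U UU) Ux. apply: filterS hh.
    by move=> [x' i] /= hh; exists U.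
  have cfex : forall U, exists c, U \in Us -> U `&` C !=set0 ->
      C c /\ U c /\ \forall v \near one, U (mul c (inv v)).
    move=> U; case: (pselect (U \in Us /\ U `&` C !=set0)); last first.
      by move=> hn; exists one => h1 h2; exfalso; apply: hn.
    move=> [UU [c [Uc Cc]]]; exists c => _ _; split => //; split => //.
    have h1 := @near2_fst G G (nbhs one) (nbhs_filter one) c _ (near_mul tg (oUs U UU) Uc).
    have h2 : \forall i \near one, U (mul c i) by apply: filterS h1 => i [].
    have hi : inv x @[x --> one] --> one.
      by have := @tg_inv_cont _ _ _ _ tg one; rewrite /continuous_at (inv_one tg).
    exact: hi h2.
  have [cf hcf] := choice cfex.
  have P2 : \forall v \near one, forall U, U \in Us ->
      U `&` C !=set0 -> U (mul (cf U) (inv v)).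
    apply: near_seq => U UU.
    case: (pselect (U `&` C !=set0)) => hUC.
      have [_ [_ hh]] := hcf U UU hUC.
      by apply: filterS hh => v hv _.
    by apply: filterS filterT => v _ hh; exfalso; apply: hUC.
  have [H [op [j [KH [ij [g1 g2]]]]]] := hB C _ cC (filterI P1 P2).
  exists H, op, j; split => //; split => //; split.
    move=> U UU UC.
    have [Cc [Uc _]] := hcf U UU UC.
    have [h [v [[_ Pv] e]]] := g1 _ Cc.
    exists h; have := Pv U UU UC; rewrite e.
    by rewrite -(tg_mulA tg) (tg_mulgV tg) (tg_mulg1 tg).
  move=> x y Cx Cy Cxy.
  have [u [[Pu _] e]] := g2 x y Cx Cy Cxy.
  have [U UU [U1 U2]] := Pu _ Cxy.
  by exists U => //; rewrite e; split.
- move=> hA C U cC nU.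
  have key : forall c, exists O : set G, open O /\ (C c -> O c) /\
      (forall a b, O a -> O b -> U (mul (inv a) b)).
    move=> c; case: (pselect (C c)) => Cc; last first.
      by exists set0; split; [exact: open0 | split].
    have nU' : nbhs (mul (inv c) c) U by rewrite (tg_mulVg tg).
    have [A [B [nA [nB sub]]]] := mul_split tg nU'.
    have nA' : nbhs c (inv @^-1` A) := @tg_inv_cont _ _ _ _ tg c _ nA.
    exists (interior (inv @^-1` A `&` B)); split; first exact: open_interior.
    split; first by move=> _; exact: (filterI nA' nB).
    move=> a b /interior_subset [Aa _] /interior_subset [_ Bb].
    exact: sub.
  have [f hf] := choice key.
  have [D' _ sub] := cc G one C cC G C f (fun i _ => (hf i).1)
     (fun c Cc => ex_intro2 _ _ c Cc ((hf c).2.1 Cc)).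
  pose Us := [seq f i | i <- finmap.enum_fset D'].
  have [H [op [j [KH [ij [g1 g2]]]]]] := hA C Us cC
    (fun V VU => match mapP VU with ex_intro2 i _ e => eq_ind_r open (hf i).1 e end)
    (fun c Cc => match sub c Cc with ex_intro2 i iD fic =>
         ex_intro2 _ _ (f i) (map_f f iD) fic end).
  exists H, op, j; split => //; split => //; split.
    move=> c Cc; have [i iD fic] := sub c Cc.
    have [h fih] := g1 (f i) (map_f f iD) (ex_intro _ c (conj fic Cc)).
    exists h, (mul (inv (j h)) c); split; first exact: (hf i).2.2 _ _ fih fic.
    by rewrite (tg_mulA tg) (tg_mulgV tg) (tg_mul1g tg).
  move=> x y Cx Cy Cxy.
  have [V /mapP [i _ ->] [h1 h2]] := g2 x y Cx Cy Cxy.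
  exists (mul (inv (mul (j x) (j y))) (j (op x y))); split.
    exact: (hf i).2.2 _ _ h2 h1.
  by rewrite (tg_mulA tg) (tg_mulgV tg) (tg_mul1g tg).
Qed.
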